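(* Let $A_1,\dots,A_N$ be symmetric $N\times N$ matrices over $\mathbb{F}_2$ with $(A_i)_{k,k}=\delta_{ik}$ for all $i,k$, and for $z\in\mathbb{F}_2^N$ let $A(z)=\sum_{i=1}^Nz(i)A_i$. Then, for $y,z$ chosen uniformly and independently from $\mathbb{F}_2^N$, $$\Pr_{y,z}\big\{A(z)\cdot y=y+z+\mathbf{1}\big\}\le\Big(\frac34\Big)^N,$$ where $\mathbf{1}$ is the all-ones vector. *)

(* Defs.v *)
From HB Require Import structures.
From mathcomp Require Import all_boot all_order all_algebra.
Set Implicit Arguments. Unset Strict Implicit. Unset Printing Implicit Defensive.
Import GRing.Theory Num.Theory.
Local Open Scope ring_scope.

Definition Amat (N : nat) (A : 'I_N -> 'M['F_2]_N) (z : 'cV['F_2]_N) : 'M['F_2]_N :=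
  \sum_(i < N) z i 0 *: A i.

Definition ones (N : nat) : 'cV['F_2]_N := const_mx 1.

Definition prob_event (N : nat) (A : 'I_N -> 'M['F_2]_N) : rat :=
  (#|[set yz : 'cV['F_2]_N * 'cV['F_2]_N |
       Amat A yz.2 *m yz.1 == yz.1 + yz.2 + ones N]|)%:R
  / (#|{: 'cV['F_2]_N * 'cV['F_2]_N}|)%:R.

(* Main.v *)
Require Import Defs.
From HB Require Import structures.
From mathcomp Require Import all_boot all_order all_algebra all_fingroup.
From Stdlib Require Import FunctionalExtensionality.
Import GRing.Theory Num.Theory.
Local Open Scope ring_scope.
Set Implicit Arguments. Unset Strict Implicit. Unset Printing Implicit Defensive.


Lemma F2_cases (x : 'F_2) : x = 0 \/ x = 1.
Proof. case: x => [[|[|m]]] //= H; [left|right]; exact: val_inj. Qed.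
Lemma F2_add_self (x : 'F_2) : x + x = 0.
Proof. by case: (F2_cases x) => ->; apply: val_inj. Qed.
Lemma F2_opp (x : 'F_2) : - x = x.
Proof. by case: (F2_cases x) => ->; apply: val_inj. Qed.
Lemma F2_mulxx (x : 'F_2) : x * x = x.
Proof. by case: (F2_cases x) => ->; rewrite ?mulr0 ?mulr1. Qed.
Lemma F2_neq0 (x : 'F_2) : x != 0 -> x = 1.
Proof. by case: (F2_cases x) => -> //; rewrite eqxx. Qed.

Definition fn N := 'cV['F_2]_N -> 'F_2.
Definition affine N (l : fn N) := exists (c : 'F_2) (w : 'I_N -> 'F_2),
  forall z, l z = c + \sum_i w i * z i 0.

Inductive deg_le N : nat -> fn N -> Prop :=
| dl_const r c : deg_le r (fun _ => c)
| dl_add r g h : deg_le r g -> deg_le r h -> deg_le r (fun z => g z + h z)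
| dl_mul r g l : deg_le r g -> affine l -> deg_le r.+1 (fun z => g z * l z).
Arguments dl_const {N} r c.
Arguments dl_add {N r g h}.
Arguments dl_mul {N r g l}.

Lemma deg_le_ext N r (g h : fn N) : deg_le r g -> (forall z, g z = h z) -> deg_le r h.
Proof. by move=> H E; have -> : h = g by apply: functional_extensionality => z; rewrite E. Qed.

Lemma deg_le_S N r (g : fn N) : deg_le r g -> deg_le r.+1 g.
Proof.
elim=> {r g} [r c|r g h _ Hg _ Hh|r g l _ Hg Hl]; first exact: dl_const.
  exact: dl_add.
exact: dl_mul.
Qed.

Lemma deg_le_mono N r r' (g : fn N) : (r <= r')%N -> deg_le r g -> deg_le r' g.
Proof.
move=> /subnK <-; elim: (r' - r)%N => [|k IH] H; first by rewrite add0n.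
by rewrite addSn; apply: deg_le_S; apply: IH.
Qed.

Lemma deg_le_mulc N r (g : fn N) c : deg_le r g -> deg_le r (fun z => g z * c).
Proof.
elim=> {r g} [r c'|r g h _ Hg _ Hh|r g l _ Hg Hl].
- exact: dl_const.
- by apply: deg_le_ext (dl_add Hg Hh) _ => z; rewrite mulrDl.
- by apply: deg_le_ext (dl_mul Hg Hl) _ => z; rewrite -!mulrA [l z * c]mulrC.
Qed.

Lemma deg_le0_const N r (g : fn N) : deg_le r g -> r = 0%N -> exists c, forall z, g z = c.
Proof.
elim=> {r g} [r c|r g h _ Hg _ Hh|r g l _ Hg Hl] // E.
- by exists c.
- by case: (Hg E) => a Ha; case: (Hh E) => b Hb; exists (a + b) => z; rewrite Ha Hb.
Qed.

Lemma deg_le_sum N r (I : eqType) (s : seq I) (F : I -> fn N) :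
  (forall i, i \in s -> deg_le r (F i)) -> deg_le r (fun z => \sum_(i <- s) F i z).
Proof.
elim: s => [|x s IH] H.
  by apply: deg_le_ext (dl_const r 0) _ => z; rewrite big_nil.
have IH' : deg_le r (fun z => \sum_(i <- s) F i z).
  by apply: IH => i Hi; apply: H; rewrite in_cons Hi orbT.
by apply: deg_le_ext (dl_add (H x (mem_head _ _)) IH') _ => z; rewrite big_cons.
Qed.

Lemma deg_le_prod N (I : eqType) (s : seq I) (F : I -> fn N) :
  (forall i, affine (F i)) -> deg_le (size s) (fun z => \prod_(i <- s) F i z).
Proof.
move=> H; elim: s => [|x s IH].
  by apply: deg_le_ext (dl_const 0 1) _ => z; rewrite big_nil.
by apply: deg_le_ext (dl_mul IH (H x)) _ => z; rewrite big_cons mulrC.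
Qed.

Definition chi N (V : {set 'I_N}) : 'cV['F_2]_N := \col_k (k \in V)%:R.

Definition Delta N (e : 'cV['F_2]_N) (h : fn N) : fn N := fun z => h z + h (z + e).

Lemma affine_shift N (l : fn N) e : affine l -> affine (fun z => l (z + e)).
Proof.
case=> c [w Hw]; exists (c + \sum_i w i * e i 0), w => z.
rewrite Hw -addrA; congr (_ + _); rewrite -big_split /=; apply: eq_bigr => i _.
by rewrite mxE mulrDr addrC.
Qed.

Lemma affine_diff N (l : fn N) e : affine l -> exists k, forall z, l z + l (z + e) = k.
Proof.
case=> c [w Hw]; exists (\sum_i w i * e i 0) => z.
rewrite !Hw addrACA F2_add_self add0r -big_split /=.
apply: eq_bigr => i _; rewrite mxE mulrDr addrA F2_add_self add0r //.
Qed.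

Lemma Delta_deg N r (h : fn N) e : deg_le r h -> deg_le r.-1 (Delta e h).
Proof.
elim=> {r h} [r c|r g h _ Hg _ Hh|r g l Hg0 Hg Hl].
- by apply: deg_le_ext (dl_const _ 0) _ => z; rewrite /Delta F2_add_self.
- by apply: deg_le_ext (dl_add Hg Hh) _ => z; rewrite /Delta addrACA.
- case: (affine_diff e Hl) => k Hk.
  have E z : Delta e (fun z => g z * l z) z = Delta e g z * l (z + e) + g z * k.
    rewrite /Delta -(Hk z) mulrDr mulrDl.
    move: (g z) (l z) (g (z + e)) (l (z + e)) => a b c d.
    by case: (F2_cases a) => ->; case: (F2_cases b) => ->; case: (F2_cases c) => ->;
      case: (F2_cases d) => ->; apply: val_inj.
  have H1 : deg_le r (fun z => Delta e g z * l (z + e)).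
    case: r Hg0 Hg {E} => [|r] Hg0 Hg.
      case: (deg_le0_const Hg0 erefl) => c Hc.
      by apply: deg_le_ext (dl_const _ 0) _ => z; rewrite /Delta !Hc F2_add_self mul0r.
    exact: dl_mul Hg (affine_shift e Hl).
  exact: deg_le_ext (dl_add H1 (deg_le_mulc k Hg0)) (fun z => esym (E z)).
Qed.


Lemma setU1D1_eq (T : finType) (t : T) (j : {set T}) : ((t |: j) :\ t == j) = (t \notin j).
Proof.
apply/eqP/idP => [<-|tj]; first by rewrite !inE eqxx.
apply/setP => x; rewrite !inE; case: (eqVneq x t) => [->|] //=.
by rewrite (negbTE tj).
Qed.

Lemma sum_subset_split N (T : {set 'I_N}) t (F : {set 'I_N} -> 'F_2) : t \in T ->
  \sum_(V : {set 'I_N} | V \subset T) F V =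
  \sum_(V : {set 'I_N} | V \subset T :\ t) (F V + F (t |: V)).
Proof.
move=> tT; rewrite big_split /= (bigID (fun V : {set 'I_N} => t \in V)) /= addrC.
congr (_ + _).
  by apply: eq_bigl => V; rewrite subsetD1.
rewrite (reindex_onto (fun V => t |: V) (fun W => W :\ t)) /=; last first.
  by move=> i /andP[_ ti]; rewrite setD1K.
apply: eq_bigl => V; rewrite setU11 andbT setU1D1_eq subsetD1 subUset sub1set tT.
by [].
Qed.

Lemma chiU1 N (V : {set 'I_N}) t : t \notin V -> chi (t |: V) = chi V + chi [set t].
Proof.
move=> tV; apply/matrixP => i j; rewrite !mxE !inE.
case: (eqVneq i t) => [->|]; first by rewrite (negbTE tV) /= add0r.
by rewrite /= addr0.
Qed.

Lemma coef_vanish N r (h : fn N) (T : {set 'I_N}) : deg_le r h -> (r < #|T|)%N ->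
  \sum_(V : {set 'I_N} | V \subset T) h (chi V) = 0.
Proof.
elim: r h T => [|r IH] h T Hh HT.
all: have [t tT] : exists t, t \in T by apply/set0Pn; rewrite -card_gt0; apply: leq_ltn_trans HT.
all: rewrite (sum_subset_split _ tT).
all: have E : forall V : {set 'I_N}, V \subset T :\ t -> h (chi V) + h (chi (t |: V)) = Delta (chi [set t]) h (chi V)
  by move=> V; rewrite subsetD1 => /andP[_ tV]; rewrite chiU1.
all: rewrite (eq_bigr _ E).
  case: (deg_le0_const Hh erefl) => c Hc.
  by apply: big1 => V _; rewrite /Delta !Hc F2_add_self.
apply: IH; first exact: (Delta_deg _ Hh).
by rewrite (cardsD1 t T) tT add1n ltnS in HT.
Qed.


Lemma sum_pairing (I : finType) (P : pred I) (f : I -> I) (F : I -> 'F_2) :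
  involutive f -> (forall x, P (f x) = P x) -> (forall x, F (f x) = F x) ->
  (forall x, P x -> f x != x) -> \sum_(x | P x) F x = 0.
Proof.
move=> fK Pf Ff Hne.
rewrite (bigID (fun x => (enum_rank x < enum_rank (f x))%N)) /=.
set a := (X in X + _).
have -> : \sum_(i | P i && ~~ (enum_rank i < enum_rank (f i))%N) F i = a.
  rewrite (reindex_inj (inv_inj fK)) /=.
  apply: eq_big => x; last by rewrite Ff.
  rewrite Pf fK; case Px: (P x) => //=.
  rewrite -leqNgt leq_eqVlt; case: eqP => //= E.
  by have := Hne x Px; rewrite -(enum_rank_inj (val_inj E)) eqxx.
exact: F2_add_self.
Qed.

Definition Cz N (A : 'I_N -> 'M['F_2]_N) (z : 'cV['F_2]_N) : 'M['F_2]_N := Amat A z - 1%:M.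
Definition subS N (S : {set 'I_N}) (M : 'M['F_2]_N) : 'M['F_2]_#|S| :=
  \matrix_(i, j) M (enum_val i) (enum_val j).
Definition D N (A : 'I_N -> 'M['F_2]_N) (S : {set 'I_N}) (z : 'cV['F_2]_N) : 'F_2 :=
  \det (subS S (Cz A z)).

Lemma Amat_entry N (A : 'I_N -> 'M['F_2]_N) z k l : Amat A z k l = \sum_i z i 0 * A i k l.
Proof. by rewrite /Amat summxE; apply: eq_bigr => i _; rewrite mxE. Qed.

Lemma Cz_sym N (A : 'I_N -> 'M['F_2]_N) (Asym : forall i, (A i)^T = A i) z k l :
  Cz A z k l = Cz A z l k.
Proof.
rewrite /Cz !mxE !Amat_entry eq_sym; congr (_ - _); apply: eq_bigr => i _.
by rewrite -{1}(Asym i) mxE.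
Qed.

Lemma Cz_aff N (A : 'I_N -> 'M['F_2]_N) k l : affine (fun z => Cz A z k l).
Proof.
exists (- (k == l)%:R), (fun i => A i k l) => z.
by rewrite /Cz !mxE Amat_entry addrC; congr (_ + _); apply: eq_bigr => i _; rewrite mulrC.
Qed.

Lemma Cz_diag N (A : 'I_N -> 'M['F_2]_N) (Adiag : forall i k : 'I_N, A i k k = (i == k)%:R) z k :
  Cz A z k k = z k 0 + 1.
Proof.
rewrite /Cz !mxE Amat_entry eqxx F2_opp (bigD1 k) //= Adiag eqxx mulr1 big1 ?addr0 //.
by move=> i /negbTE ik; rewrite Adiag ik mulr0.
Qed.

Lemma det_F2 n (M : 'M['F_2]_n) : \det M = \sum_(s : 'S_n) \prod_i M i (s i).
Proof.
rewrite /determinant; apply: eq_bigr => s _.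
by rewrite F2_opp expr1n mul1r.
Qed.

Definition Pt N (A : 'I_N -> 'M['F_2]_N) (S : {set 'I_N}) (s : 'S_#|S|) (z : 'cV['F_2]_N) : 'F_2 :=
  \prod_i subS S (Cz A z) i (s i).
Arguments Pt {N} A S s z.

Lemma subS_E N (S : {set 'I_N}) (M : 'M['F_2]_N) i j : subS S M i j = M (enum_val i) (enum_val j).
Proof. by rewrite mxE. Qed.

Lemma Pt_inv N (A : 'I_N -> 'M['F_2]_N) (Asym : forall i, (A i)^T = A i) S s z :
  Pt A S (invg s) z = Pt A S s z.
Proof.
rewrite /Pt (reindex_inj (@perm_inj _ s)) /=; apply: eq_bigr => i _.
by rewrite permK !subS_E (Cz_sym Asym).
Qed.

Lemma D_split N (A : 'I_N -> 'M['F_2]_N) (Asym : forall i, (A i)^T = A i) S z :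
  D A S z = \prod_(i < #|S|) Cz A z (enum_val i) (enum_val i) +
            \sum_(s : 'S_#|S| | (s != 1%g) && ((invg s) == s)) Pt A S s z.
Proof.
rewrite /D det_F2 (bigD1 1%g) //=; congr (_ + _).
  by apply: eq_bigr => i _; rewrite perm1 subS_E.
rewrite (bigID (fun s : 'S_#|S| => (invg s) == s)) /=.
rewrite [X in _ + X](@sum_pairing _ _ (fun s => (invg s))) ?addr0 //.
- exact: invgK.
- by move=> s; rewrite invgK eq_invg1 (eq_sym s (invg s)).
- by move=> s; have := Pt_inv Asym s z; rewrite /Pt.
- by move=> s /andP[].
Qed.

Lemma subS_aff N (A : 'I_N -> 'M['F_2]_N) (S : {set 'I_N}) i j :
  affine (fun z => subS S (Cz A z) i j).
Proof.
case: (Cz_aff A (enum_val i) (enum_val j)) => c [w H]; exists c, w => z.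
by rewrite subS_E H.
Qed.

Lemma Pt_deg N (A : 'I_N -> 'M['F_2]_N) (Asym : forall i, (A i)^T = A i) (S : {set 'I_N}) (s : 'S_#|S|) :
  s != 1%g -> (invg s) == s -> deg_le #|S|.-1 (Pt A S s).
Proof.
move=> s1 /eqP sinv.
have [i0 Hi0] : exists i0, s i0 != i0.
  apply/existsP; apply: contraR s1 => /existsPn H; apply/eqP/permP => i.
  by rewrite perm1; apply/eqP; move: (H i); rewrite negbK.
set j0 := s i0.
have sj0 : s j0 = i0 by rewrite /j0 -{1}sinv permK.
have E z : Pt A S s z = \prod_(i | i != j0) subS S (Cz A z) i (s i).
  rewrite /Pt (bigD1 j0) //= (bigD1 i0) /=; last by rewrite eq_sym.
  rewrite mulrA; congr (_ * _).
  by rewrite sj0 !subS_E (Cz_sym Asym) F2_mulxx.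
apply: deg_le_ext (fun z => esym (E z)).
have -> : #|S|.-1 = size (enum (predC1 j0)) by rewrite -cardE cardC1 card_ord.
have H := @deg_le_prod _ _ (enum (predC1 j0)) (fun i z => subS S (Cz A z) i (s i))
  (fun i => subS_aff A i (s i)).
by apply: deg_le_ext H _ => z; rewrite big_enum.
Qed.

Lemma deg_le_sum_pred N r (I : finType) (P : pred I) (F : I -> fn N) :
  (forall i, P i -> deg_le r (F i)) -> deg_le r (fun z => \sum_(i | P i) F i z).
Proof.
move=> H; have H' := @deg_le_sum N r _ [seq i <- index_enum I | P i] F.
apply: deg_le_ext (H' _) _ => [i|z]; first by rewrite mem_filter => /andP[/H].
by rewrite big_filter.
Qed.

Lemma prod_boolF2 n (b : 'I_n -> bool) : (\prod_i (b i)%:R : 'F_2) = ([forall i, b i])%:R.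
Proof.
case: (boolP [forall i, b i]) => [/forallP H|/forallPn [i Hi]].
  by apply: big1 => i _; rewrite H.
by rewrite (bigD1 i) //= (negbTE Hi) mul0r.
Qed.

Lemma natr_pow2F2 k : ((2 ^ k)%N%:R : 'F_2) = (k == 0%N)%:R.
Proof.
case: k => [|k] //; rewrite natrX.
have -> : (2%:R : 'F_2) = 0 by apply: val_inj.
by rewrite expr0n.
Qed.

Lemma coefDsum N (A : 'I_N -> 'M['F_2]_N) (Asym : forall i, (A i)^T = A i)
  (Adiag : forall i k : 'I_N, A i k k = (i == k)%:R) (T S : {set 'I_N}) :
  (#|S| <= #|T|)%N -> \sum_(V : {set 'I_N} | V \subset T) D A S (chi V) = (T \subset S)%:R.
Proof.
move=> HST.
rewrite (eq_bigr _ (fun V _ => D_split Asym S (chi V))) big_split /=.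
have -> : \sum_(V : {set 'I_N} | V \subset T)
    \sum_(s : 'S_#|S| | (s != 1%g) && ((invg s) == s)) Pt A S s (chi V) = 0.
  case: (posnP #|T|) => [T0|Tpos].
    apply: big1 => V _; apply: big_pred0 => s.
    have -> : s = 1%g.
      apply/permP => i; exfalso.
      have : (i < 0)%N by apply: leq_trans (ltn_ord i) _; rewrite -T0.
      by rewrite ltn0.
    by rewrite eqxx.
  have Hd : deg_le #|S|.-1 (fun z => \sum_(s : 'S_#|S| | (s != 1%g) && ((invg s) == s)) Pt A S s z).
    apply: deg_le_sum_pred => s /andP[s1 si]; exact: Pt_deg.
  apply: (coef_vanish Hd).
  by move: HST; case: #|S| => [|n] //= _.
rewrite addr0.
have E : forall V : {set 'I_N}, \prod_(i < #|S|) Cz A (chi V) (enum_val i) (enum_val i) =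
    ([disjoint S & V])%:R.
  move=> V.
  have -> : [disjoint S & V] = [forall i : 'I_#|S|, enum_val i \notin V].
    rewrite disjoint_subset; apply/subsetP/forallP => [H i|H x xS].
      by have := H _ (enum_valP i); rewrite inE.
    by rewrite inE; move: (H (enum_rank_in xS x)); rewrite enum_rankK_in.
  rewrite -prod_boolF2; apply: eq_bigr => i _; rewrite (Cz_diag Adiag) mxE.
  by case: (enum_val i \in V) => //; apply: val_inj.
rewrite (eq_bigr _ (fun V _ => E V)).
rewrite (bigID (fun V : {set 'I_N} => [disjoint S & V])) /=.
rewrite [X in _ + X]big1 ?addr0; last by move=> V /andP[_ /negbTE ->].
rewrite (eq_bigr (fun _ => 1)); last by move=> V /andP[_ ->].
rewrite (eq_bigl (fun V => V \in powerset (T :\: S))); last first.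
  by move=> V; rewrite powersetE subsetD disjoint_sym.
rewrite sumr_const card_powerset natr_pow2F2.
by rewrite cards_eq0 setD_eq0.
Qed.


Definition ev N (i : 'I_#|{: {set 'I_N}}|) : {set 'I_N} := enum_val i.

Definition Em N (A : 'I_N -> 'M['F_2]_N) : 'M['F_2]_#|{: {set 'I_N}}| :=
  \matrix_(i, j) D A (ev j) (chi (ev i)).
Definition Zm N : 'M['F_2]_#|{: {set 'I_N}}| := \matrix_(i, j) ((ev j) \subset (ev i))%:R.

Lemma sum_ev N (G : {set 'I_N} -> 'F_2) : \sum_(k < #|{: {set 'I_N}}|) G (ev k) = \sum_V G V.
Proof. by rewrite -(big_enum_val (A := predT)). Qed.

Lemma ZE N (A : 'I_N -> 'M['F_2]_N) i j :
  (Zm N *m Em A) i j = \sum_(V : {set 'I_N} | V \subset ev i) D A (ev j) (chi V).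
Proof.
rewrite big_mkcond /= -sum_ev mxE; apply: eq_bigr => k _; rewrite !mxE.
by case: (ev k \subset ev i); rewrite ?mul1r ?mul0r.
Qed.

Lemma det_exists_perm n (M : 'M['F_2]_n) : \det M != 0 -> exists s : 'S_n, forall i, M i (s i) != 0.
Proof.
case: (boolP [exists s : 'S_n, [forall i, M i (s i) != 0]]) => [/existsP [s /forallP H] _|/existsPn H].
  by exists s.
rewrite det_F2 big1 ?eqxx // => s _.
case/forallPn: (H s) => i; rewrite negbK => /eqP Hi.
by rewrite (bigD1 i) //= Hi mul0r.
Qed.

Lemma detZE N (A : 'I_N -> 'M['F_2]_N) (Asym : forall i, (A i)^T = A i)
  (Adiag : forall i k : 'I_N, A i k k = (i == k)%:R) : \det (Zm N *m Em A) = 1.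
Proof.
set Am := Zm N *m Em A.
have key i j : Am i j != 0 -> (#|ev j| <= #|ev i|)%N -> i = j.
  move=> H1 H2; move: H1; rewrite /Am ZE coefDsum // => H1; apply: enum_val_inj; apply/eqP.
  rewrite eqEcard H2 andbT; apply: contraR H1 => /negbTE ->; by rewrite eqxx.
have diag i : Am i i = 1 by rewrite /Am ZE coefDsum // subxx.
rewrite det_F2 (bigD1 1%g) //= [X in _ + X]big1 ?addr0; first by apply: big1 => i _; rewrite perm1 diag.
move=> s s1.
case: (boolP [forall i, Am i (s i) != 0]) => [/forallP H|/forallPn [i]]; last first.
  by rewrite negbK => /eqP Hi; rewrite (bigD1 i) //= Hi mul0r.
exfalso; move/negP: s1; apply; apply/eqP/permP => i; rewrite perm1.
have le i' : (#|ev i'| <= #|ev (s i')|)%N.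
  case: (leqP #|ev (s i')| #|ev i'|) => [H'|H'].
    by rewrite -(key _ _ (H i') H').
  exact: ltnW.
have sumE : (\sum_(i' < #|{: {set 'I_N}}|) #|ev (s i')| = \sum_(i' < #|{: {set 'I_N}}|) #|ev i'|)%N.
  exact: esym (reindex_inj (@perm_inj _ s)).
case: (leqP #|ev (s i)| #|ev i|) => [H'|H']; first by rewrite -(key _ _ (H i) H').
have : (\sum_(i' < #|{: {set 'I_N}}|) #|ev i'| < \sum_(i' < #|{: {set 'I_N}}|) #|ev (s i')|)%N.
  rewrite (bigD1 i) //= [X in (_ < X)%N](bigD1 i) //=.
  by rewrite -addSn; apply: leq_add => //; apply: leq_sum => i' _; apply: le.
by rewrite sumE ltnn.
Qed.

Lemma Em_perm N (A : 'I_N -> 'M['F_2]_N) (Asym : forall i, (A i)^T = A i)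
  (Adiag : forall i k : 'I_N, A i k k = (i == k)%:R) :
  exists s : 'S_#|{: {set 'I_N}}|, forall i, D A (ev (s i)) (chi (ev i)) != 0.
Proof.
have : \det (Em A) != 0.
  apply/eqP => H; have := detZE Asym Adiag; rewrite det_mulmx H mulr0 => /eqP.
  by rewrite eq_sym oner_eq0.
case/det_exists_perm => s Hs; exists s => i; by have := Hs i; rewrite mxE.
Qed.


Lemma ker_bound N (C : 'M['F_2]_N) (S : {set 'I_N}) : \det (subS S C) != 0 ->
  (#|[set y : 'cV['F_2]_N | C *m y == 0%R]| <=
   #|[set y : 'cV['F_2]_N | [forall k in S, y k (0%R : 'I_1) == 0%R]]|)%N.
Proof.
move=> Hdet.
set K := [set y : 'cV['F_2]_N | C *m y == 0].
pose pi (y : 'cV['F_2]_N) : 'cV['F_2]_N := \col_k (if k \in S then 0 else y k 0).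
have inj : {in K &, injective pi}.
  move=> y1 y2; rewrite !inE => /eqP H1 /eqP H2 Hp.
  set d := y1 - y2.
  have Cd : C *m d = 0 by rewrite mulmxBr H1 H2 subrr.
  have dout k : k \notin S -> d k 0 = 0.
    move=> kS; have := congr1 (fun m : 'cV['F_2]_N => m k 0) Hp; rewrite /= !mxE (negbTE kS) => E.
    by rewrite E subrr.
  pose d' : 'cV['F_2]_#|S| := \col_i d (enum_val i) 0.
  have Cd' : subS S C *m d' = 0.
    apply/matrixP => i j; rewrite !mxE.
    have := congr1 (fun m : 'cV['F_2]_N => m (enum_val i) j) Cd; rewrite !mxE => E0.
    transitivity (\sum_k C (enum_val i) k * d k j); last exact: E0.
    rewrite [RHS](bigID (mem S)) /= [X in _ = _ + X]big1 ?addr0; last first.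
      by move=> k kS; rewrite (ord1 j) dout ?mulr0.
    rewrite [RHS](big_enum_val (A := mem S)) /=; apply: eq_bigr => k _.
    by rewrite subS_E !mxE (ord1 j).
  have Hu : subS S C \in unitmx by rewrite unitmxE unitfE.
  have d'0 : d' = 0 by rewrite -(mulKmx Hu d') Cd' mulmx0.
  apply/eqP; rewrite -subr_eq0; apply/eqP/matrixP => k j; rewrite (ord1 j) [RHS]mxE.
  case: (boolP (k \in S)) => kS; last exact: dout k kS.
  have := congr1 (fun m : 'cV['F_2]_#|S| => m (enum_rank_in kS k) 0) d'0.
  by rewrite !mxE enum_rankK_in.
rewrite -(card_in_imset inj); apply: subset_leq_card; apply/subsetP => _ /imsetP [y _ ->].
rewrite inE; apply/forallP => k; apply/implyP => kS; by rewrite mxE kS.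
Qed.

Lemma sol_bound N (A : 'I_N -> 'M['F_2]_N) z :
  (#|[set y : 'cV['F_2]_N | Amat A z *m y == (y + z + ones N)%R]| <=
   #|[set y : 'cV['F_2]_N | Cz A z *m y == 0%R]|)%N.
Proof.
set Sol := [set y | _].
have CzE y : y \in Sol -> Cz A z *m y = z + ones N.
  rewrite inE => /eqP H; rewrite /Cz mulmxBl mul1mx H.
  by rewrite addrAC [y + z]addrC addrK.
case: (set_0Vmem Sol) => [->|[y0 Hy0]]; first by rewrite cards0.
have inj : {in Sol &, injective (fun y => y - y0)}.
  by move=> y1 y2 _ _ /eqP; rewrite subr_eq addrNK => /eqP.
rewrite -(card_in_imset inj); apply: subset_leq_card; apply/subsetP => _ /imsetP [y Hy ->].
by rewrite inE mulmxBr (CzE _ Hy) (CzE _ Hy0) subrr.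
Qed.

Lemma card_pairs (T1 T2 : finType) (P : T1 -> T2 -> bool) :
  #|[set p : T1 * T2 | P p.1 p.2]| = (\sum_(b : T2) #|[set a | P a b]|)%N.
Proof.
rewrite -sum1_card.
rewrite (eq_bigl (fun p : T1 * T2 => P p.1 p.2)); last by move=> p; rewrite inE.
rewrite big_mkcond /=.
rewrite -(pair_big xpredT xpredT (fun a b => if P a b then 1%N else 0%N)) /= exchange_big /=.
apply: eq_bigr => b _; rewrite -sum1_card [RHS]big_mkcond /=.
apply: eq_bigr => a _; by rewrite inE.
Qed.

Definition supp N (z : 'cV['F_2]_N) : {set 'I_N} := [set k | z k 0 != 0].

Lemma supp_chi N (V : {set 'I_N}) : supp (chi V) = V.
Proof.
apply/setP => k; rewrite inE mxE; case: (k \in V) => //=; by rewrite ?oner_eq0.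
Qed.

Lemma chi_supp N (z : 'cV['F_2]_N) : chi (supp z) = z.
Proof.
apply/matrixP => k j; rewrite (ord1 j) !mxE inE.
by case: (F2_cases (z k 0)) => ->; rewrite ?eqxx ?oner_eq0.
Qed.

Lemma free_bound N :
  (\sum_(S : {set 'I_N}) #|[set y : 'cV['F_2]_N | [forall k in S, y k (0%R : 'I_1) == 0%R]]| <= 3 ^ N)%N.
Proof.
rewrite -(card_pairs (fun (y : 'cV['F_2]_N) (S : {set 'I_N}) => [forall k in S, y k 0 == 0%R])).
set X := [set p | _].
pose code (p : 'cV['F_2]_N * {set 'I_N}) (k : 'I_N) : nat :=
  if k \in p.2 then 2 else if p.1 k 0 == 0%R then 0 else 1.
have codelt p k : (code p k < 3)%N by rewrite /code; case: (k \in p.2) => //; case: (p.1 k 0 == 0%R).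
pose f (p : 'cV['F_2]_N * {set 'I_N}) : {ffun 'I_N -> 'I_3} := [ffun k => inord (code p k)].
have inj : {in X &, injective f}.
  move=> [y S] [y' S']; rewrite !inE /= => /forallP H /forallP H' E.
  have Ec k : code (y, S) k = code (y', S') k.
    have := congr1 (fun g : {ffun 'I_N -> 'I_3} => val (g k)) E; rewrite /f /= !ffunE.
    by rewrite !inordK.
  have ES : S = S'.
    apply/setP => k; have := Ec k; rewrite /code /=.
    by case: (k \in S); case: (k \in S'); case: (y k 0 == 0%R); case: (y' k 0 == 0%R).
  subst S'; congr (_, _); apply/matrixP => k j; rewrite (ord1 j).
  case: (boolP (k \in S)) => kS.
    by move: (H k) (H' k); rewrite kS /= => /eqP -> /eqP ->.
  have := Ec k; rewrite /code /= (negbTE kS).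
  by case: (F2_cases (y k 0)) => ->; case: (F2_cases (y' k 0)) => ->; rewrite ?eqxx ?oner_eq0.
rewrite -(card_in_imset inj); apply: leq_trans (max_card _) _.
by rewrite card_ffun !card_ord.
Qed.

Unset Implicit Arguments.

Theorem proposition4p5 (N : nat) (A : 'I_N -> 'M['F_2]_N)
  (Asym : forall i, (A i)^T = A i)
  (Adiag : forall i k : 'I_N, A i k k = (i == k)%:R) :
  prob_event A <= (3%:R / 4%:R) ^+ N.
Proof.
have H1 : (#|[set yz : 'cV['F_2]_N * 'cV['F_2]_N |
       Amat A yz.2 *m yz.1 == (yz.1 + yz.2 + ones N)%R]| <= 3 ^ N)%N.
  rewrite (card_pairs (fun (y z : 'cV['F_2]_N) => Amat A z *m y == y + z + ones N)).
  apply: leq_trans; first by apply: leq_sum => z _; exact: sol_bound A z.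
  have hbij : bijective (fun i : 'I_#|{: {set 'I_N}}| => chi (ev i)).
    exists (fun z => enum_rank (supp z)) => [i|z].
      by rewrite supp_chi /ev enum_valK.
    by rewrite /ev enum_rankK chi_supp.
  rewrite (reindex _ (onW_bij _ hbij)) /=.
  case: (Em_perm Asym Adiag) => s Hs.
  apply: leq_trans; first by apply: leq_sum => i _; exact: ker_bound (Hs i).
  rewrite (reindex_inj (@perm_inj _ s^-1%g)) /=.
  under eq_bigr do rewrite permKV.
  rewrite -(big_enum_val (A := predT)
     (fun S : {set 'I_N} => #|[set y : 'cV['F_2]_N | [forall k in S, y k (0%R : 'I_1) == 0%R]]|)).
  exact: free_bound.
rewrite /prob_event card_prod card_mx card_Fp // muln1 -expnMn.
rewrite expr_div_n -!natrX.
apply: ler_wpM2r; first by rewrite invr_ge0 ler0n.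
by rewrite ler_nat.
Qed.
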